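(* The Lehner expansion of an irrational $\alpha\in(1,2)$ is eventually periodic if and only if $\alpha$ is a quadratic irrational.
   Context: The Lehner map on $[1,2)$ is $L(x)=\frac{1}{2-x}$ for $x\in[1,3/2)$ and $L(x)=\frac{1}{x-1}$ for $x\in[3/2,2)$. For irrational $x\in(1,2)$, its Lehner digits are $(a_i,\epsilon_i)=(2,-1)$ if $L^i(x)\in[1,3/2)$ and $(1,+1)$ if $L^i(x)\in[3/2,2)$, and $x=a_0+\cfrac{\epsilon_0}{a_1+\cfrac{\epsilon_1}{a_2+\cdots}}$ is its Lehner expansion. Eventually periodic means the digit sequence $((a_i,\epsilon_i))_{i\ge0}$ is eventually periodic. *)

(* Defs.v *)
From Stdlib Require Import Reals ZArith.
Open Scope R_scope.

(* The Lehner map on [1,2): L(x) = 1/(2-x) on [1,3/2), L(x) = 1/(x-1) on [3/2,2).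
   Defined totally on R (values outside [1,2) are irrelevant). *)
Definition lehner_map (x : R) : R :=
  if Rlt_dec x (3/2) then / (2 - x) else / (x - 1).

Definition lehner_digit (x : R) (i : nat) : Z * Z :=
  if Rlt_dec (Nat.iter i lehner_map x) (3/2) then (2%Z, (-1)%Z) else (1%Z, 1%Z).

Definition eventually_periodic {A : Type} (u : nat -> A) : Prop :=
  exists N p : nat, (0 < p)%nat /\ forall i : nat, (N <= i)%nat -> u (i + p)%nat = u i.

Definition irrational (x : R) : Prop :=
  forall p q : Z, q <> 0%Z -> x <> IZR p / IZR q.

Definition quadratic_irrational (x : R) : Prop :=
  irrational x /\
  exists a b c : Z, a <> 0%Z /\ IZR a * x ^ 2 + IZR b * x + IZR c = 0.

(* Main.v *)
Require Import Defs.
From Stdlib Require Import Reals ZArith Lra Lia Psatz List Classical.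
Open Scope R_scope.

Notation L := lehner_map.

Lemma L_range x : 1 <= x <= 2 -> 1 <= L x <= 2.
Proof.
  intros [H1 H2]. unfold lehner_map. destruct (Rlt_dec x (3/2)) as [h|h].
  - assert (A: / 1 <= / (2 - x)) by (apply Rinv_le_contravar; lra).
    assert (B: / (2 - x) <= / (1/2)) by (apply Rinv_le_contravar; lra).
    replace (/1) with 1 in A by field. replace (/(1/2)) with 2 in B by field. lra.
  - assert (A: / 1 <= / (x - 1)) by (apply Rinv_le_contravar; lra).
    assert (B: / (x - 1) <= / (1/2)) by (apply Rinv_le_contravar; lra).
    replace (/1) with 1 in A by field. replace (/(1/2)) with 2 in B by field. lra.
Qed.

Lemma iter_range n x : 1 <= x <= 2 -> 1 <= Nat.iter n L x <= 2.
Proof. intros H; induction n; simpl; auto. apply L_range; auto. Qed.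

Lemma Mrep k : forall y z, 1 <= y <= 2 -> 1 <= z <= 2 ->
 (forall i, (i < k)%nat -> (Nat.iter i L y < 3/2 <-> Nat.iter i L z < 3/2)) ->
 exists a b c d : Z, (0 <= c)%Z /\ (1 <= d)%Z /\ (Z.of_nat k + 1 <= c + d)%Z /\
  (a*d - b*c = 1 \/ a*d - b*c = -1)%Z /\
  (y - 1) * (IZR c * (Nat.iter k L y - 1) + IZR d) = IZR a * (Nat.iter k L y - 1) + IZR b /\
  (z - 1) * (IZR c * (Nat.iter k L z - 1) + IZR d) = IZR a * (Nat.iter k L z - 1) + IZR b.
Proof.
  intros y z Hy Hz. induction k as [|k IH]; intros Hd.
  - exists 1%Z, 0%Z, 0%Z, 1%Z. simpl. repeat split; try lia; ring.
  - destruct IH as (a & b & c & d & Hc & Hd1 & Hcd & Hdet & Ey & Ez).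
    { intros i Hi. apply Hd. lia. }
    assert (Ry := iter_range k y Hy). assert (Rz := iter_range k z Hz).
    assert (Hk := Hd k ltac:(lia)).
    set (yk := Nat.iter k L y) in *. set (zk := Nat.iter k L z) in *.
    simpl Nat.iter. fold yk zk. unfold lehner_map.
    destruct (Rlt_dec yk (3/2)) as [h1|h1]; destruct (Rlt_dec zk (3/2)) as [h2|h2];
      try (exfalso; tauto).
    + exists (a+b)%Z, b, (c+d)%Z, d. rewrite !plus_IZR.
      repeat split; try lia.
      * transitivity ((y-1)*(IZR c*(yk-1)+IZR d)/(2-yk)). field. lra.
        rewrite Ey. field. lra.
      * transitivity ((z-1)*(IZR c*(zk-1)+IZR d)/(2-zk)). field. lra.
        rewrite Ez. field. lra.
    + exists b, (a+b)%Z, d, (c+d)%Z. rewrite !plus_IZR.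
      repeat split; try lia.
      * transitivity ((y-1)*(IZR c*(yk-1)+IZR d)/(yk-1)). field. lra.
        rewrite Ey. field. lra.
      * transitivity ((z-1)*(IZR c*(zk-1)+IZR d)/(zk-1)). field. lra.
        rewrite Ez. field. lra.
Qed.
Lemma contr_alg (e f t t' a b c d dr k : R) :
  0 <= t <= 1 -> 0 <= t' <= 1 -> 0 <= c -> 1 <= d -> k + 1 <= c + d -> 0 <= k ->
  dr = a*d - b*c -> (dr = 1 \/ dr = -1) ->
  e * (c*t + d) = a*t + b -> f * (c*t'+d) = a*t'+b ->
  (e - f) * (k+1) <= 1.
Proof.
  intros Ht Ht' Hc Hd Hk Hk0 Hdr Hdr' Ee Ef.
  set (X := (c*t+d)*(c*t'+d)).
  assert (HX : 1 <= X). { unfold X. assert (1 <= c*t+d) by nra. assert (1 <= c*t'+d) by nra. nra. }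
  assert (HE : (e - f) * X = dr * (t - t')).
  { unfold X. replace ((e - f) * ((c * t + d) * (c * t' + d))) with
      ((e*(c*t+d))*(c*t'+d) - (f*(c*t'+d))*(c*t+d)) by ring.
    rewrite Ee, Ef, Hdr. ring. }
  set (W := d*(c+d)).
  assert (HI1 : (t - t') * W <= X).
  { unfold W, X. assert (0 <= c*c*t*t') by (apply Rmult_le_pos; [|lra]; apply Rmult_le_pos; nra).
    assert (0 <= c*d*t') by (apply Rmult_le_pos; nra).
    assert (0 <= d*d*(1 - t + t')) by (apply Rmult_le_pos; nra). nra. }
  assert (HI2 : (t' - t) * W <= X).
  { unfold W, X. assert (0 <= c*c*t*t') by (apply Rmult_le_pos; [|lra]; apply Rmult_le_pos; nra).
    assert (0 <= c*d*t) by (apply Rmult_le_pos; nra).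
    assert (0 <= d*d*(1 - t' + t)) by (apply Rmult_le_pos; nra). nra. }
  assert (HW : k + 1 <= W) by (unfold W; nra).
  destruct (Rle_dec (e - f) 0) as [h|h]. nra.
  assert (H1 : (e - f) * W * X <= X).
  { replace ((e - f) * W * X) with (((e - f) * X) * W) by ring. rewrite HE.
    destruct Hdr' as [-> | ->]; nra. }
  assert (H2 : (e - f) * W <= 1).
  { apply (Rmult_le_reg_r X). lra. lra. }
  nra.
Qed.

Lemma small_nonpos r : (forall k : nat, r * (INR k + 1) <= 1) -> r <= 0.
Proof.
  intros H. destruct (Rle_dec r 0) as [h|h]; auto. exfalso.
  destruct (archimed (/ r)) as [A _].
  assert (Hp: (0 < up (/r))%Z). { apply lt_IZR. assert (0 < / r) by (apply Rinv_0_lt_compat; lra). lra. }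
  specialize (H (Z.to_nat (up (/ r)))). rewrite INR_IZR_INZ, Z2Nat.id in H by lia.
  assert (r * / r = 1) by (field; lra). nra.
Qed.

Definition ntq (x : R) : Prop :=
  exists a b c : Z, ~ (a = 0 /\ b = 0 /\ c = 0)%Z /\ IZR a * x ^ 2 + IZR b * x + IZR c = 0.

Lemma ntq_back x : 1 <= x <= 2 -> ntq (L x) -> ntq x.
Proof.
  intros Hx (a & b & c & Hn & E). unfold lehner_map in E.
  destruct (Rlt_dec x (3/2)) as [h|h].
  - exists c, (-b - 4*c)%Z, (a + 2*b + 4*c)%Z. split. lia.
    rewrite !minus_IZR, !plus_IZR, !mult_IZR, !opp_IZR.
    assert (E2: (IZR a * (/ (2 - x)) ^ 2 + IZR b * / (2 - x) + IZR c) * (2-x)^2 = 0) by (rewrite E; ring).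
    replace ((IZR a * (/ (2 - x)) ^ 2 + IZR b * / (2 - x) + IZR c) * (2-x)^2) with
      (IZR a + IZR b * (2-x) + IZR c * (2-x)^2) in E2 by (field; lra).
    lra.
  - exists c, (b - 2*c)%Z, (a - b + c)%Z. split. lia.
    rewrite !minus_IZR, !plus_IZR, !mult_IZR.
    assert (E2: (IZR a * (/ (x - 1)) ^ 2 + IZR b * / (x - 1) + IZR c) * (x-1)^2 = 0) by (rewrite E; ring).
    replace ((IZR a * (/ (x - 1)) ^ 2 + IZR b * / (x - 1) + IZR c) * (x-1)^2) with
      (IZR a + IZR b * (x-1) + IZR c * (x-1)^2) in E2 by (field; lra).
    rewrite minus_IZR, <- E2. ring.
Qed.

Lemma ntq_iter_back n x : 1 <= x <= 2 -> ntq (Nat.iter n L x) -> ntq x.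
Proof.
  intros Hx. induction n; simpl; auto. intros H. apply IHn.
  apply ntq_back; auto. apply iter_range; auto.
Qed.

Lemma ntq_quad x : irrational x -> ntq x -> quadratic_irrational x.
Proof.
  intros Hi (a & b & c & Hn & E). split; auto. exists a, b, c. split; auto.
  intros ->. destruct (Z.eq_dec b 0) as [->|hb].
  - apply Hn. repeat split; auto. apply eq_IZR. simpl in E. lra.
  - apply (Hi (- c)%Z b hb). rewrite opp_IZR. simpl in E.
    assert (IZR b <> 0) by (apply not_0_IZR; auto). field_simplify; auto.
    apply (Rmult_eq_reg_r (IZR b)); auto. field_simplify; auto. lra.
Qed.

Lemma dir1 alpha : 1 < alpha < 2 -> irrational alpha ->
  eventually_periodic (lehner_digit alpha) -> quadratic_irrational alpha.
Proof.
  intros Ha Hi (N & p & Hp & Hper).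
  assert (Ha' : 1 <= alpha <= 2) by lra.
  set (y := Nat.iter N L alpha).
  set (z := Nat.iter p L y).
  assert (Hy : 1 <= y <= 2) by (apply iter_range; auto).
  assert (Hz : 1 <= z <= 2) by (apply iter_range; auto).
  assert (Hdig : forall i, (Nat.iter i L y < 3/2 <-> Nat.iter i L z < 3/2)).
  { intros i. unfold z, y. rewrite <- !Nat.iter_add.
    specialize (Hper (i + N)%nat ltac:(lia)). unfold lehner_digit in Hper.
    replace (i + N + p)%nat with (i + p + N)%nat in Hper by lia.
    destruct (Rlt_dec (Nat.iter (i + p + N) L alpha) (3/2));
    destruct (Rlt_dec (Nat.iter (i + N) L alpha) (3/2)); try tauto;
    inversion Hper. }
  assert (Eyz : y = z).
  { assert (K1 : forall k:nat, (y - z) * (INR k + 1) <= 1).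
    { intros k. destruct (Mrep k y z Hy Hz (fun i _ => Hdig i)) as (a & b & c & d & Hc & Hd & Hcd & Hdet & Ey & Ez).
      assert (Ry := iter_range k y Hy). assert (Rz := iter_range k z Hz).
      replace (y - z) with ((y-1) - (z-1)) by ring.
      apply (contr_alg _ _ (Nat.iter k L y - 1) (Nat.iter k L z - 1) (IZR a) (IZR b) (IZR c) (IZR d)
             (IZR a * IZR d - IZR b * IZR c)); auto; try lra.
      all: try (apply IZR_le; lia).
      all: try (rewrite INR_IZR_INZ, <- !plus_IZR; apply IZR_le; lia).
      all: try apply pos_INR.
      rewrite <- !mult_IZR, <- minus_IZR. destruct Hdet as [-> | ->]; auto. }
    assert (K2 : forall k:nat, (z - y) * (INR k + 1) <= 1).
    { intros k. destruct (Mrep k z y Hz Hy (fun i _ => iff_sym (Hdig i))) as (a & b & c & d & Hc & Hd & Hcd & Hdet & Ey & Ez).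
      assert (Ry := iter_range k y Hy). assert (Rz := iter_range k z Hz).
      replace (z - y) with ((z-1) - (y-1)) by ring.
      apply (contr_alg _ _ (Nat.iter k L z - 1) (Nat.iter k L y - 1) (IZR a) (IZR b) (IZR c) (IZR d)
             (IZR a * IZR d - IZR b * IZR c)); auto; try lra.
      all: try (apply IZR_le; lia).
      all: try (rewrite INR_IZR_INZ, <- !plus_IZR; apply IZR_le; lia).
      all: try apply pos_INR.
      rewrite <- !mult_IZR, <- minus_IZR. destruct Hdet as [-> | ->]; auto. }
    apply small_nonpos in K1. apply small_nonpos in K2. lra. }
  destruct (Mrep p y y Hy Hy (fun i _ => iff_refl _)) as (a & b & c & d & Hc & Hd & Hcd & Hdet & Ey & _).
  fold z in Ey. rewrite <- Eyz in Ey.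
  apply ntq_quad; auto. apply (ntq_iter_back N); auto. fold y.
  exists c, (d - a - 2*c)%Z, (c - d + a - b)%Z. split.
  - intros (h1 & h2 & h3). subst c. nia.
  - rewrite !minus_IZR, !mult_IZR, !plus_IZR. rewrite minus_IZR. replace (IZR c * y ^ 2 + (IZR d - IZR a - 2 * IZR c) * y + (IZR c - IZR d + IZR a - IZR b)) with ((y - 1) * (IZR c * (y - 1) + IZR d) - (IZR a * (y - 1) + IZR b)) by ring. rewrite Ey. ring.
Qed.


Lemma periodic_from_repeat alpha n m : (n < m)%nat ->
  Nat.iter n L alpha = Nat.iter m L alpha -> eventually_periodic (lehner_digit alpha).
Proof.
  intros Hnm E. exists n, (m - n)%nat. split. lia. intros i Hi.
  assert (E2 : Nat.iter (i + (m - n)) L alpha = Nat.iter i L alpha).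
  { replace (i + (m - n))%nat with ((i - n) + m)%nat by lia.
    rewrite Nat.iter_add, <- E, <- Nat.iter_add. f_equal. lia. }
  unfold lehner_digit. rewrite E2. reflexivity.
Qed.

Definition zrange (K : Z) : list Z :=
  map (fun i => (Z.of_nat i - K)%Z) (seq 0 (Z.to_nat (2*K+1))).

Lemma in_zrange K z : (Z.abs z <= K)%Z -> In z (zrange K).
Proof.
  intros H. unfold zrange. apply in_map_iff. exists (Z.to_nat (z + K)). split.
  - rewrite Z2Nat.id by lia. lia.
  - apply in_seq. lia.
Qed.

Lemma pigeon (Sp : nat -> Prop) (f : nat -> Z * Z) (K : Z) :
  (forall n, exists m, (n <= m)%nat /\ Sp m) ->
  (forall m, Sp m -> (Z.abs (fst (f m)) <= K)%Z /\ (Z.abs (snd (f m)) <= K)%Z) ->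
  exists n m, (n < m)%nat /\ f n = f m.
Proof.
  intros Hinf Hb. apply NNPP. intros Hno.
  assert (Hl : forall j : nat, exists l : list nat, length l = j /\ NoDup (map f l) /\ Forall Sp l).
  { induction j as [|j [l (Hlen & Hnd & Hs)]].
    - exists nil. simpl. repeat split; auto. constructor.
    - destruct (Hinf (S (list_max l))) as (m & Hm & Sm).
      exists (m :: l). simpl. repeat split; auto.
      constructor; auto. intros Hin. apply in_map_iff in Hin. destruct Hin as (j0 & Ej & Hj).
      assert (j0 <= list_max l)%nat.
      { assert (Hf : Forall (fun k => (k <= list_max l)%nat) l) by (apply list_max_le; lia).
        rewrite Forall_forall in Hf. auto. }
      apply Hno. exists j0, m. split. lia. auto. }
  destruct (Hl (S (length (list_prod (zrange K) (zrange K))))) as (l & Hlen & Hnd & Hs).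
  assert (Hinc : incl (map f l) (list_prod (zrange K) (zrange K))).
  { intros x Hx. apply in_map_iff in Hx. destruct Hx as (j & <- & Hj).
    rewrite Forall_forall in Hs. destruct (Hb j (Hs j Hj)) as [h1 h2].
    destruct (f j) as [u v]. apply in_prod_iff. split; apply in_zrange; auto. }
  apply NoDup_incl_length in Hinc; auto. rewrite length_map in Hinc. lia.
Qed.

Definition stepS (D : Z) (pq : Z * Z) : Z * Z :=
  (- (fst pq - snd pq), (D - (fst pq - snd pq) * (fst pq - snd pq)) / snd pq)%Z.

Lemma Sstep (D P Q : Z) (u : R) : (0 < D)%Z -> (forall k, sqrt (IZR D) <> IZR k) ->
  Q <> 0%Z -> (Q | D - P * P)%Z -> u = (IZR P + sqrt (IZR D)) / IZR Q ->
  let P2 := fst (stepS D (P, Q)) in let Q2 := snd (stepS D (P, Q)) in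
  Q2 <> 0%Z /\ (Q2 | D - P2 * P2)%Z /\
  / (u - 1) = (IZR P2 + sqrt (IZR D)) / IZR Q2 /\
  / ((IZR P - sqrt (IZR D)) / IZR Q - 1) = (IZR P2 - sqrt (IZR D)) / IZR Q2.
Proof.
  intros HD Hsk HQ Hdiv Hu P2 Q2. unfold P2, Q2, stepS. simpl.
  set (s := sqrt (IZR D)) in *.
  assert (Hss : s * s = IZR D) by (apply sqrt_sqrt; apply IZR_le; lia).
  set (P' := (P - Q)%Z).
  assert (Hdiv2 : (Q | D - P' * P')%Z).
  { destruct Hdiv as [k Hk]. exists (k + 2 * P - Q)%Z. unfold P'. nia. }
  destruct Hdiv2 as [k Hk]. rewrite Hk, Z.div_mul by auto.
  assert (Hk0 : k <> 0%Z).
  { intros ->. assert (IZR D = IZR (P' * P')) by (f_equal; lia).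
    assert (Hsq : (s - IZR P') * (s + IZR P') = 0) by (rewrite mult_IZR in H; nra).
    apply Rmult_integral in Hsq. destruct Hsq as [h|h].
    - apply (Hsk P'). lra.
    - apply (Hsk (- P')%Z). rewrite opp_IZR. lra. }
  assert (HkR : IZR k * IZR Q = s * s - IZR P' * IZR P').
  { rewrite Hss, <- !mult_IZR, <- minus_IZR. f_equal. lia. }
  assert (HQR : IZR Q <> 0) by (apply not_0_IZR; auto).
  assert (HkR0 : IZR k <> 0) by (apply not_0_IZR; auto).
  assert (Hp1 : IZR P' + s <> 0). { intros h. apply (Hsk (- P')%Z). rewrite opp_IZR. lra. }
  assert (Hp2 : IZR P' - s <> 0). { intros h. apply (Hsk P'). lra. }
  assert (EP' : IZR P' = IZR P - IZR Q) by (unfold P'; apply minus_IZR).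
  repeat split; auto.
  - exists Q. replace (- P' * - P')%Z with (P' * P')%Z by ring. lia.
  - rewrite Hu. rewrite opp_IZR.
    replace ((IZR P + s) / IZR Q - 1) with ((IZR P' + s) / IZR Q) by (rewrite EP'; field; auto).
    apply (Rmult_eq_reg_r (IZR k * (IZR P' + s))).
    2: { apply Rmult_integral_contrapositive; auto. }
    field_simplify; auto. rewrite Rmult_comm in HkR. nra.
  - rewrite opp_IZR.
    replace ((IZR P - s) / IZR Q - 1) with ((IZR P' - s) / IZR Q) by (rewrite EP'; field; auto).
    apply (Rmult_eq_reg_r (IZR k * (IZR P' - s))).
    2: { apply Rmult_integral_contrapositive; auto. }
    field_simplify; auto. rewrite Rmult_comm in HkR. nra.
Qed.


Fixpoint st (D : Z) (init : Z * Z) (alpha : R) (n : nat) : Z * Z :=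
  match n with
  | O => init
  | S m => let pq := st D init alpha m in
           if Rlt_dec (Nat.iter m L alpha) (3/2) then ((fst pq - snd pq)%Z, snd pq)
           else stepS D pq
  end.


Lemma core_inv D init alpha :
  (0 < D)%Z -> (forall k, sqrt (IZR D) <> IZR k) ->
  let P n := fst (st D init alpha n) in
  let Q n := snd (st D init alpha n) in
  let V n := (IZR (P n) + sqrt (IZR D)) / IZR (Q n) in
  let W n := (IZR (P n) - sqrt (IZR D)) / IZR (Q n) in
  let x n := Nat.iter n L alpha in
  forall n, Q n <> 0%Z -> (Q n | D - P n * P n)%Z -> 1 < V n -> x n = 1 + / V n ->
  ((x n < 3/2 /\ V (S n) = V n - 1 /\ W (S n) = W n - 1 /\ 2 < V n /\ Q (S n) = Q n) \/
   (~ x n < 3/2 /\ V (S n) = / (V n - 1) /\ W (S n) = / (W n - 1) /\ V n < 2)) /\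
  (Q (S n) <> 0%Z /\ (Q (S n) | D - P (S n) * P (S n))%Z /\ 1 < V (S n) /\ x (S n) = 1 + / V (S n)).
Proof.
  intros HD Hsk P Q V W x n HQ Hdiv HV Hx.
  set (s := sqrt (IZR D)) in *.
  assert (HQR : IZR (Q n) <> 0) by (apply not_0_IZR; auto).
  assert (HxS : x (S n) = L (x n)) by reflexivity.
  destruct (Rlt_dec (x n) (3/2)) as [h|h].
  - assert (Est : st D init alpha (S n) = ((P n - Q n)%Z, Q n)).
    { simpl. fold (x n). destruct (Rlt_dec (x n) (3/2)); [reflexivity|contradiction]. }
    assert (EP : P (S n) = (P n - Q n)%Z) by (unfold P; rewrite Est; reflexivity).
    assert (EQ : Q (S n) = Q n) by (unfold Q; rewrite Est; reflexivity).
    assert (EV : V (S n) = V n - 1).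
    { unfold V at 1. rewrite EP, EQ, minus_IZR. unfold V. field. auto. }
    assert (EW : W (S n) = W n - 1).
    { unfold W at 1. rewrite EP, EQ, minus_IZR. unfold W. field. auto. }
    assert (HV2 : 2 < V n).
    { assert (/ V n < 1/2) by lra.
      assert (HVp : 0 < V n) by lra.
      apply (Rmult_lt_compat_l (V n)) in H; auto. rewrite Rinv_r in H; lra. }
    split. left. repeat split; auto.
    repeat split.
    + rewrite EQ; auto.
    + rewrite EP, EQ. destruct Hdiv as [k Hk]. exists (k + 2 * P n - Q n)%Z. nia.
    + lra.
    + rewrite HxS, EV. unfold lehner_map. destruct (Rlt_dec (x n) (3/2)); [|contradiction].
      rewrite Hx. field. split; lra.
  - assert (Est : st D init alpha (S n) = stepS D (P n, Q n)).
    { simpl. fold (x n). destruct (Rlt_dec (x n) (3/2)); [contradiction|]. reflexivity. }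
    destruct (Sstep D (P n) (Q n) (V n) HD Hsk HQ Hdiv eq_refl) as (H1 & H2 & H3 & H4).
    assert (EP : P (S n) = fst (stepS D (P n, Q n))) by (unfold P; rewrite Est; reflexivity).
    assert (EQ : Q (S n) = snd (stepS D (P n, Q n))) by (unfold Q; rewrite Est; reflexivity).
    assert (EV : V (S n) = / (V n - 1)) by (unfold V at 1; rewrite EP, EQ; fold s; rewrite H3; reflexivity).
    assert (EW : W (S n) = / (W n - 1)) by (unfold W; rewrite EP, EQ; symmetry; exact H4).
    assert (HV2 : V n < 2).
    { assert (HVp : 0 < V n) by lra.
      assert (HVne : V n <> 2).
      { intros E. apply (Hsk (2 * Q n - P n)%Z). rewrite minus_IZR, mult_IZR.
        unfold V in E. apply (Rmult_eq_compat_r (IZR (Q n))) in E.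
        field_simplify in E; auto. lra. }
      destruct (Rlt_dec (V n) 2) as [hh|hh]; auto. exfalso.
      assert (/ V n < 1/2).
      { apply (Rmult_lt_reg_l (V n)); auto. rewrite Rinv_r; lra. }
      lra. }
    split. right. repeat split; auto.
    repeat split.
    + rewrite EQ; auto.
    + rewrite EP, EQ; auto.
    + rewrite EV. assert (0 < V n - 1 < 1) by lra.
      apply (Rmult_lt_reg_l (V n - 1)). lra. rewrite Rinv_r; lra.
    + rewrite HxS, EV. unfold lehner_map. destruct (Rlt_dec (x n) (3/2)); [contradiction|].
      rewrite Hx. field. split; lra.
Qed.


Lemma dir2_core D P0 Q0 alpha : 1 < alpha < 2 -> (0 < D)%Z ->
  (forall k, sqrt (IZR D) <> IZR k) -> Q0 <> 0%Z -> (Q0 | D - P0 * P0)%Z ->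
  alpha = (IZR P0 + sqrt (IZR D)) / IZR Q0 ->
  eventually_periodic (lehner_digit alpha).
Proof.
  intros Ha HD Hsk HQ0 Hdiv0 Ha0.
  set (init := stepS D (P0, Q0)).
  pose proof (core_inv D init alpha HD Hsk) as Hcore.
  set (P := fun n => fst (st D init alpha n)) in *.
  set (Q := fun n => snd (st D init alpha n)) in *.
  set (s := sqrt (IZR D)) in *.
  set (V := fun n => (IZR (P n) + s) / IZR (Q n)) in *.
  set (W := fun n => (IZR (P n) - s) / IZR (Q n)) in *.
  set (x := fun n => Nat.iter n L alpha) in *.
  cbv zeta in Hcore.
  assert (Hss : s * s = IZR D) by (apply sqrt_sqrt; apply IZR_le; lia).
  assert (Hs0 : 0 < s) by (apply sqrt_lt_R0; apply IZR_lt; lia).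
  assert (Hs1 : 1 <= s).
  { destruct (Rle_dec 1 s); auto. assert (1 <= IZR D) by (apply IZR_le; lia). nra. }
  assert (HsD : s <= IZR D) by nra.
  assert (Inv : forall n, Q n <> 0%Z /\ (Q n | D - P n * P n)%Z /\ 1 < V n /\ x n = 1 + / V n).
  { induction n as [|n IH].
    - destruct (Sstep D P0 Q0 alpha HD Hsk HQ0 Hdiv0 Ha0) as (H1 & H2 & H3 & _).
      assert (EV : V 0%nat = / (alpha - 1)) by (unfold V; rewrite H3; reflexivity).
      repeat split; auto.
      + rewrite EV. apply (Rmult_lt_reg_l (alpha - 1)). lra. rewrite Rinv_r; lra.
      + rewrite EV, Rinv_inv. unfold x. simpl. ring.
    - destruct IH as (h1 & h2 & h3 & h4). apply (Hcore n h1 h2 h3 h4). }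
  assert (Cases : forall n,
    (x n < 3/2 /\ V (S n) = V n - 1 /\ W (S n) = W n - 1 /\ 2 < V n /\ Q (S n) = Q n) \/
    (~ x n < 3/2 /\ V (S n) = / (V n - 1) /\ W (S n) = / (W n - 1) /\ V n < 2)).
  { intros n. destruct (Inv n) as (h1 & h2 & h3 & h4). apply (Hcore n h1 h2 h3 h4). }
  assert (HQR : forall n, IZR (Q n) <> 0) by (intros n; apply not_0_IZR; apply Inv).
  assert (Hdiff : forall n, (V n - W n) * IZR (Q n) = 2 * s).
  { intros n. unfold V, W. field. apply HQR. }
  assert (Hsum : forall n, (V n + W n) * IZR (Q n) = 2 * IZR (P n)).
  { intros n. unfold V, W. field. apply HQR. }
  assert (HW1 : forall n, W n <> 1).
  { intros n E. apply (Hsk (P n - Q n)%Z). rewrite minus_IZR.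
    unfold W in E. apply (Rmult_eq_compat_r (IZR (Q n))) in E.
    field_simplify in E; [lra | apply HQR]. }
  assert (Rep : forall n m, (n < m)%nat -> st D init alpha n = st D init alpha m ->
                 eventually_periodic (lehner_digit alpha)).
  { intros n m Hnm E. apply (periodic_from_repeat alpha n m Hnm).
    destruct (Inv n) as (_ & _ & _ & En). destruct (Inv m) as (_ & _ & _ & Em).
    change (x n = x m). rewrite En, Em. unfold V, P, Q. rewrite E. reflexivity. }
  destruct (classic (exists n0, W n0 < 1)) as [[n0 Hn0] | HB].
  -
    assert (Step0 : forall n, W n < 1 -> W (S n) < 0).
    { intros n h. destruct (Cases n) as [(_ & _ & E & _) | (_ & _ & E & _)]; rewrite E.
      lra. apply Rinv_lt_0_compat. lra. }
    assert (Neg : forall m, (S n0 <= m)%nat -> W m < 0).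
    { intros m Hm. induction Hm. apply Step0; auto. apply Step0; lra. }
    destruct (pigeon (fun m => (S n0 <= m)%nat) (st D init alpha) (2 * D)%Z) as (n & m & Hnm & E).
    + intros n. exists (Nat.max n (S n0)). split; lia.
    + intros m Hm. pose proof (Neg m Hm) as Wm. destruct (Inv m) as (_ & _ & Vm & _).
      pose proof (Hdiff m) as Dm.
      assert (HQp : 0 < IZR (Q m)).
      { destruct (Rlt_dec 0 (IZR (Q m))); auto. exfalso.
        assert (IZR (Q m) < 0) by (pose proof (HQR m); lra). nra. }
      assert (HQs : IZR (Q m) < 2 * s) by nra.
      assert (HPl : - s < IZR (P m)).
      { assert (0 < V m) by lra. unfold V in H.
        apply (Rmult_lt_compat_r (IZR (Q m))) in H; auto. field_simplify in H; lra. }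
      assert (HPu : IZR (P m) < s).
      { unfold W in Wm. apply (Rmult_lt_compat_r (IZR (Q m))) in Wm; auto.
        field_simplify in Wm; lra. }
      assert (a1 : (Q m < 2 * D)%Z) by (apply lt_IZR; rewrite mult_IZR; lra).
      assert (a2 : (0 < Q m)%Z) by (apply lt_IZR; lra).
      assert (a3 : (P m < D)%Z) by (apply lt_IZR; lra).
      assert (a4 : (- D < P m)%Z) by (apply lt_IZR; rewrite opp_IZR; lra).
      change (Z.abs (P m) <= 2 * D /\ Z.abs (Q m) <= 2 * D)%Z. lia.
    + apply (Rep n m Hnm E).
  -
    assert (Wge : forall n, 1 < W n).
    { intros n. destruct (Rlt_dec 1 (W n)); auto. exfalso.
      destruct (Rle_lt_or_eq_dec (W n) 1) as [h|h]. lra. apply HB; eauto. apply (HW1 n h). }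
    assert (Qbound : forall n, (Q n * Q n <= Q 0%nat * Q 0%nat)%Z).
    { induction n as [|n IH]. lia.
      destruct (Cases n) as [(_ & _ & _ & _ & E) | (_ & EV & EW & Vlt)].
      - rewrite E. auto.
      - destruct (Inv n) as (_ & _ & Vn & _).
        pose proof (Wge n) as Wn. pose proof (Wge (S n)) as WSn.
        assert (Wle : W n - 1 <= 1).
        { rewrite EW in WSn. destruct (Rle_dec (W n - 1) 1); auto. exfalso.
          assert (/ (W n - 1) < 1). { apply (Rmult_lt_reg_l (W n - 1)). lra. rewrite Rinv_r; lra. }
          lra. }
        set (e := (V n - 1) * (W n - 1)).
        assert (He0 : 0 < e) by (unfold e; nra).
        assert (He1 : e <= 1) by (unfold e; nra).
        set (d := V n - W n). set (d' := V (S n) - W (S n)).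
        assert (Hdd : d' * e = - d).
        { unfold d', d, e. rewrite EV, EW. field. split; lra. }
        assert (Hsq : d * d <= d' * d').
        { assert (d * d = d' * d' * (e * e)) by (replace (d*d) with ((-d)*(-d)) by ring; rewrite <- Hdd; ring).
          rewrite H. assert (0 <= d' * d') by nra. assert (e * e <= 1) by nra. replace (d' * d') with (d' * d' * 1) at 2 by ring. apply Rmult_le_compat_l; lra. }
        pose proof (Hdiff n) as D1. pose proof (Hdiff (S n)) as D2. fold d in D1. fold d' in D2.
        assert (Hd'0 : d' <> 0) by (intros h; rewrite h in D2; lra).
        assert (Hfin : IZR (Q (S n)) * IZR (Q (S n)) <= IZR (Q n) * IZR (Q n)).
        { assert (E1 : (d * IZR (Q n)) * (d * IZR (Q n)) = (d' * IZR (Q (S n))) * (d' * IZR (Q (S n))))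
            by (rewrite D1, D2; ring).
          assert (0 < d' * d') by (apply Rmult_lt_0_compat_sq || nra).
          destruct (Rle_dec (IZR (Q (S n)) * IZR (Q (S n))) (IZR (Q n) * IZR (Q n))) as [ok|ko]; auto.
          exfalso. nra. }
        rewrite <- !mult_IZR in Hfin. apply le_IZR in Hfin. lia. }
    assert (Inf : forall n, exists m, (n <= m)%nat /\ ~ x m < 3/2).
    { intros n. apply NNPP. intros Hno.
      assert (AllT : forall m, (n <= m)%nat -> x m < 3/2).
      { intros m Hm. apply NNPP. intros h. apply Hno. eauto. }
      assert (Dec : forall k : nat, V (k + n)%nat = V n - INR k).
      { induction k as [|k IH]. simpl. ring.
        destruct (Cases (k + n)%nat) as [(_ & E & _) | (h & _)].
        - change (S k + n)%nat with (S (k + n)). rewrite E, IH, S_INR. ring.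
        - exfalso. apply h. apply AllT. lia. }
      destruct (archimed (V n)) as [A _].
      destruct (Inv n) as (_ & _ & Vn & _).
      assert (Hp : (0 < up (V n))%Z) by (apply lt_IZR; lra).
      destruct (Inv (Z.to_nat (up (V n)) + n)%nat) as (_ & _ & Vk & _).
      rewrite Dec, INR_IZR_INZ, Z2Nat.id in Vk by lia. lra. }
    set (K := (2 * Z.abs (Q 0%nat))%Z).
    destruct (pigeon (fun m => ~ x m < 3/2) (st D init alpha) K) as (n & m & Hnm & E).
    + exact Inf.
    + intros m Hm. destruct (Cases m) as [(h & _) | (_ & EV & EW & Vlt)]. contradiction.
      destruct (Inv m) as (_ & _ & Vm & _).
      pose proof (Wge m) as Wm. pose proof (Wge (S m)) as WSm.
      assert (Wle : W m <= 2).
      { rewrite EW in WSm. destruct (Rle_dec (W m - 1) 1); [lra|]. exfalso.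
        assert (/ (W m - 1) < 1). { apply (Rmult_lt_reg_l (W m - 1)). lra. rewrite Rinv_r; lra. }
        lra. }
      pose proof (Hsum m) as Sm.
      assert (HP2 : IZR (P m) * IZR (P m) <= 4 * (IZR (Q m) * IZR (Q m))).
      { assert (Eq : 2 * IZR (P m) * (2 * IZR (P m)) = (V m + W m) * (V m + W m) * (IZR (Q m) * IZR (Q m)))
          by (rewrite <- Sm; ring).
        assert (0 <= IZR (Q m) * IZR (Q m)) by nra.
        assert ((V m + W m) * (V m + W m) <= 16) by nra. nra. }
      change (Z.abs (P m) <= K /\ Z.abs (Q m) <= K)%Z.
      replace 4 with (IZR 4) in HP2 by reflexivity.
      rewrite <- !mult_IZR in HP2. apply le_IZR in HP2.
      pose proof (Qbound m). unfold K. nia.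
    + apply (Rep n m Hnm E).
Qed.


Lemma dir2 alpha : 1 < alpha < 2 -> quadratic_irrational alpha ->
  eventually_periodic (lehner_digit alpha).
Proof.
  intros Ha [Hi (a & b & c & Ha0 & E)].
  set (D := (b * b - 4 * a * c)%Z).
  assert (HaR : IZR a <> 0) by (apply not_0_IZR; auto).
  assert (ED : (2 * IZR a * alpha + IZR b) * (2 * IZR a * alpha + IZR b) = IZR D).
  { unfold D. rewrite minus_IZR, !mult_IZR.
    replace ((2 * IZR a * alpha + IZR b) * (2 * IZR a * alpha + IZR b)) with
      (4 * IZR a * (IZR a * alpha ^ 2 + IZR b * alpha + IZR c) + IZR b * IZR b - 4 * IZR a * IZR c) by ring.
    rewrite E. simpl. ring. }
  assert (Hsq : forall k, D <> (k * k)%Z).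
  { intros k Hk. rewrite Hk, mult_IZR in ED.
    assert (Hf : (2 * IZR a * alpha + IZR b - IZR k) * (2 * IZR a * alpha + IZR b + IZR k) = 0) by nra.
    apply Rmult_integral in Hf. destruct Hf as [h|h].
    - apply (Hi (k - b)%Z (2 * a)%Z ltac:(lia)). rewrite minus_IZR, mult_IZR.
      field_simplify; auto. apply (Rmult_eq_reg_r (2 * IZR a)). field_simplify; auto; lra. lra.
    - apply (Hi (- k - b)%Z (2 * a)%Z ltac:(lia)). rewrite minus_IZR, mult_IZR, opp_IZR.
      field_simplify; auto. apply (Rmult_eq_reg_r (2 * IZR a)). field_simplify; auto; lra. lra. }
  assert (HD : (0 < D)%Z).
  { assert (0 <= IZR D) by (rewrite <- ED; pose proof (Rle_0_sqr (2 * IZR a * alpha + IZR b)) as hh; unfold Rsqr in hh; lra). apply le_IZR in H.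
    assert (D <> 0%Z) by (apply (Hsq 0%Z)). lia. }
  set (s := sqrt (IZR D)).
  assert (Hss : s * s = IZR D) by (apply sqrt_sqrt; apply IZR_le; lia).
  assert (Hs0 : 0 <= s) by apply sqrt_pos.
  assert (Hsk : forall k, s <> IZR k).
  { intros k h. apply (Hsq k). apply eq_IZR. rewrite mult_IZR, <- h. auto. }
  assert (Hpm : 2 * IZR a * alpha + IZR b = s \/ 2 * IZR a * alpha + IZR b = - s).
  { assert (Hf : (2 * IZR a * alpha + IZR b - s) * (2 * IZR a * alpha + IZR b + s) = 0) by nra.
    apply Rmult_integral in Hf. destruct Hf; [left|right]; lra. }
  destruct Hpm as [h|h].
  - apply (dir2_core D (- b)%Z (2 * a)%Z alpha Ha HD Hsk ltac:(lia)).
    + exists (- 2 * c)%Z. unfold D. ring.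
    + rewrite opp_IZR, mult_IZR. fold s. field_simplify; auto.
      apply (Rmult_eq_reg_r (2 * IZR a)). field_simplify; auto; lra. lra.
  - apply (dir2_core D b (- 2 * a)%Z alpha Ha HD Hsk ltac:(lia)).
    + exists (2 * c)%Z. unfold D. ring.
    + replace (IZR (-2 * a)) with (-2 * IZR a) by (rewrite mult_IZR; reflexivity). fold s. field_simplify; auto.
      apply (Rmult_eq_reg_r (- 2 * IZR a)). field_simplify; auto; lra. lra.
Qed.

Theorem proposition6p4 (alpha : R) :
  1 < alpha < 2 -> irrational alpha ->
  (eventually_periodic (lehner_digit alpha) <-> quadratic_irrational alpha).
Proof.
  intros Ha Hi. split.
  - apply dir1; auto.
  - apply dir2; auto.
Qed.
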